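(* Let $R$ be a differential field of characteristic zero, let $\ell_0,r_0\in R$, and define $\ell_{j+1}=\ell_j'+r_j+\ell_0\ell_j$, $r_{j+1}=r_j'+r_0\ell_j$ for $j\ge0$. Suppose there is $p>0$ with $\ell_p\neq0$, $\ell_{p-1}\neq0$ and $$\frac{r_p}{\ell_p}=\frac{r_{p-1}}{\ell_{p-1}}=:\alpha .$$ Let $K$ be a differential field extension of $R$ containing nonzero elements $u,v$ with $u'=\alpha u$, $v'=\ell_0v$, and an element $\beta$ with $\beta'=u^2v$. Then every solution $y\in K$ of $y''=\ell_0y'+r_0y$ is of the form $y=u^{-1}(c_2+c_1\beta)$ for some constants $c_1,c_2$ of $K$.
   Context: Successive differentiation of $y''=\ell_0y'+r_0y$ gives $y^{(j+2)}=\ell_jy'+r_jy$ with $\ell_j,r_j$ defined by the stated recurrence. *)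

(* Defs.v *)
From HB Require Import structures.
From mathcomp Require Import all_boot all_order all_algebra.
Set Implicit Arguments. Unset Strict Implicit. Unset Printing Implicit Defensive.
Import Order.TTheory GRing.Theory Num.Theory.
Local Open Scope ring_scope.

Definition is_derivation (F : fieldType) (d : F -> F) : Prop :=
  (forall x y, d (x + y) = d x + d y) /\
  (forall x y, d (x * y) = d x * y + x * d y).

Fixpoint lr (F : fieldType) (d : F -> F) (l0 r0 : F) (j : nat) : F * F :=
  match j with
  | O => (l0, r0)
  | S j' => let '(l, r) := lr d l0 r0 j' in (d l + r + l0 * l, d r + r0 * l)
  end.

Definition ell (F : fieldType) (d : F -> F) (l0 r0 : F) (j : nat) : F :=
  (lr d l0 r0 j).1.
Definition rr (F : fieldType) (d : F -> F) (l0 r0 : F) (j : nat) : F :=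
  (lr d l0 r0 j).2.

(* Main.v *)
Require Import Defs.
From HB Require Import structures.
From mathcomp Require Import all_boot all_order all_algebra.
From mathcomp Require Import ring.
Import GRing.Theory.
Local Open Scope ring_scope.

Section Der.
Variables (F : fieldType) (d : F -> F) (H : is_derivation d).

Lemma der0 : d 0 = 0.
Proof.
have h := H.1 0 0; rewrite addr0 in h.
by apply: (addrI (d 0)); rewrite addr0 -h.
Qed.

Lemma der1 : d 1 = 0.
Proof.
have h := H.2 1 1; rewrite !mulr1 !mul1r in h.
by apply: (addrI (d 1)); rewrite addr0 -h.
Qed.

Lemma derN x : d (- x) = - d x.
Proof.
have h := H.1 x (- x); rewrite subrr der0 in h.
by apply/eqP; rewrite -addr_eq0 addrC -h.
Qed.

Lemma derV x : x != 0 -> d (x^-1) = - (d x / x ^+ 2).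
Proof.
move=> nz.
have h := H.2 x x^-1; rewrite mulfV // der1 in h.
have e : x * d x^-1 = - (d x * x^-1).
  by apply/eqP; rewrite -addr_eq0 addrC -h.
have -> : d x^-1 = x^-1 * (x * d x^-1) by field.
rewrite e; field; done.
Qed.
End Der.

Lemma ellS {F : fieldType} (d : F -> F) l0 r0 j :
  ell d l0 r0 j.+1 = d (ell d l0 r0 j) + rr d l0 r0 j + l0 * ell d l0 r0 j /\
  rr d l0 r0 j.+1 = d (rr d l0 r0 j) + r0 * ell d l0 r0 j.
Proof. rewrite /ell /rr /=; by case: (lr d l0 r0 j). Qed.

Theorem mainTheorem6
  (R K : fieldType) (dR : R -> R) (dK : K -> K) (f : {rmorphism R -> K})
  (HdR : is_derivation dR) (HdK : is_derivation dK)
  (Hf : forall x, f (dR x) = dK (f x))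
  (Hchar : [pchar R] =i pred0)
  (l0 r0 : R) (p : nat) (Hp : (0 < p)%N)
  (Hlp : ell dR l0 r0 p != 0) (Hlp1 : ell dR l0 r0 p.-1 != 0)
  (Heq : rr dR l0 r0 p / ell dR l0 r0 p = rr dR l0 r0 p.-1 / ell dR l0 r0 p.-1)
  (u v beta : K) (Hu0 : u != 0) (Hv0 : v != 0)
  (Hu : dK u = f (rr dR l0 r0 p / ell dR l0 r0 p) * u)
  (Hv : dK v = f l0 * v)
  (Hbeta : dK beta = u ^+ 2 * v) :
  forall y : K, dK (dK y) = f l0 * dK y + f r0 * y ->
    exists c1 c2 : K, dK c1 = 0 /\ dK c2 = 0 /\ y = u^-1 * (c2 + c1 * beta).
Proof.
move=> y Hy.
have [Da Dm] := HdK.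
set L := fun j => f (ell dR l0 r0 j).
set Rr := fun j => f (rr dR l0 r0 j).
have Hit : forall j, iter j.+2 dK y = L j * dK y + Rr j * y.
  elim=> [|j IH]; first by rewrite /= Hy.
  have [e1 e2] := ellS dR l0 r0 j.
  rewrite iterS IH Da !Dm Hy /L /Rr e1 e2 !rmorphD !rmorphM !Hf.
  ring.
case: p Hp Hlp Hlp1 Heq Hu => [//|q] _ Hlp Hlp1 Heq Hu.
rewrite /= in Hlp1 Heq.
set a := f (rr dR l0 r0 q.+1 / ell dR l0 r0 q.+1) in Hu.
have Lp0 : L q.+1 != 0 by rewrite /L fmorph_eq0.
have Lq0 : L q != 0 by rewrite /L fmorph_eq0.
have Ha1 : Rr q.+1 = a * L q.+1.
  by rewrite /a /Rr /L rmorphM fmorphV /=; field.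
have Ha2 : Rr q = a * L q.
  by rewrite /a Heq /Rr /L rmorphM fmorphV /=; field.
set w := dK y + a * y.
have Hw : dK w = (a + f l0) * w.
  have h1 : iter q.+2 dK y = L q * w by rewrite Hit Ha2 /w; ring.
  have h2 : iter q.+3 dK y = L q.+1 * w by rewrite Hit Ha1 /w; ring.
  rewrite iterS h1 in h2.
  have [e1 _] := ellS dR l0 r0 q.
  have e1' : L q.+1 = dK (L q) + a * L q + f l0 * L q.
    by rewrite /L e1 !rmorphD !rmorphM Hf -/(Rr q) Ha2.
  rewrite e1' Dm in h2.
  apply: (mulfI Lq0).
  have -> : L q * dK w = (dK (L q) + a * L q + f l0 * L q) * w - dK (L q) * w
    by rewrite -h2; ring.
  ring.
have uv0 : u * v != 0 by rewrite mulf_neq0.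
exists (w / (u * v)), (u * y - w / (u * v) * beta).
have Dc1 : dK (w / (u * v)) = 0.
  rewrite Dm (@derV _ _ HdK _ uv0) Dm Hw Hu Hv -/a.
  by field; rewrite ?Hu0 ?Hv0.
split; first exact: Dc1.
split.
  rewrite Da (@derN _ _ HdK) Dm Dm Dc1 Hbeta Hu -/a.
  by rewrite /w; field; rewrite ?Hu0 ?Hv0.
by field; rewrite ?Hu0 ?Hv0.
Qed.
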